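(* Let $P,Q,R,S$ be the four vertices of a hinge (faces $PQS$ and $RQS$ sharing the diagonal $QS$), with radii $p,q,r,s>0$ at $P,Q,R,S$ and inversive distances $a,b,c,d,e>1$ on the edges $PQ,QR,RS,SP,QS$ respectively. Define the lengths $PQ=\sqrt{p^2+q^2+2apq}$, $QR=\sqrt{q^2+r^2+2bqr}$, $RS=\sqrt{r^2+s^2+2crs}$, $SP=\sqrt{s^2+p^2+2dsp}$, $QS=\sqrt{q^2+s^2+2eqs}$. Let $\Delta_{xyz}=x^2+y^2+z^2+2xyz-1$ and \[f=\frac{ab+cd+ace+bde+\sqrt{\Delta_{ade}}\sqrt{\Delta_{bce}}}{e^2-1}.\] Suppose \[\frac{\sqrt{\Delta_{bce}}}{p}+\frac{\sqrt{\Delta_{ade}}}{r}\le\frac{\sqrt{\Delta_{cdf}}}{q}+\frac{\sqrt{\Delta_{abf}}}{s}.\] If $QR<QS+SR$ and $SR<QS+QR$, then $PQ+PS>QS$. *)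

(* Defs.v *)
From Stdlib Require Import Reals.
Open Scope R_scope.

Definition Dlt (x y z : R) : R := x^2 + y^2 + z^2 + 2*x*y*z - 1.

Definition edge_len (x y i : R) : R := sqrt (x^2 + y^2 + 2*i*x*y).

Definition fval (a b c d e : R) : R :=
  (a*b + c*d + a*c*e + b*d*e + sqrt (Dlt a d e) * sqrt (Dlt b c e)) / (e^2 - 1).

(* Main.v *)
Require Import Defs.
From Stdlib Require Import Reals Lra Psatz.
Open Scope R_scope.

Lemma Dlt_pos x y z : 1 < x -> 1 < y -> 1 < z -> 0 < Dlt x y z.
Proof. intros. unfold Dlt. assert (0 < x*y) by nra. assert (0 < x*y*z) by nra. nra. Qed.

Definition Lf x q s a d e := e*q*s - x^2 - a*x*q - d*x*s.
Definition Tf x q s a d e := (e^2-1)*q*s - (a+d*e)*x*s - (d+a*e)*x*q.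

Lemma ident x q s a d e :
  (e^2-1)*((x^2+q^2+2*a*x*q)*(x^2+s^2+2*d*x*s) - (Lf x q s a d e)^2)
  = Dlt a d e * x^2 * (q^2+s^2+2*e*q*s) - (Tf x q s a d e)^2.
Proof. unfold Lf, Tf, Dlt. ring. Qed.

Lemma Kp x q s a d e : 0 < x -> 0 < q -> 0 < s -> 1 < a -> 1 < d -> 1 < e ->
  0 <= Lf x q s a d e ->
  0 < Tf x q s a d e + sqrt (Dlt a d e) * x * sqrt (q^2+s^2+2*e*q*s).
Proof.
  intros Hx Hq Hs Ha Hd He HL.
  assert (Hqs : 0 < q*s) by nra. assert (Heqs : 0 < e*q*s) by nra.
  set (X := sqrt (Dlt a d e)).
  set (W := sqrt (q^2+s^2+2*e*q*s)).
  assert (HX : X^2 = Dlt a d e) by (apply pow2_sqrt; left; apply Dlt_pos; lra).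
  assert (X0 : 0 <= X) by apply sqrt_pos.
  assert (HW : W^2 = q^2+s^2+2*e*q*s) by (apply pow2_sqrt; nra).
  assert (W0 : 0 <= W) by apply sqrt_pos.
  set (m := a*q + d*s).
  assert (Hm : 0 < m) by (unfold m; nra).
  set (sg := sqrt (m^2 + 4*e*q*s)).
  assert (Hsg : sg^2 = m^2 + 4*e*q*s) by (apply pow2_sqrt; nra).
  assert (sg0 : 0 <= sg) by apply sqrt_pos.
  assert (sgm : m < sg) by nra.
  set (ps := (sg - m)/2).
  assert (ps0 : 0 < ps) by (unfold ps; lra).
  assert (Lps : Lf ps q s a d e = 0).
  { transitivity (e*q*s - (sg^2 - m^2)/4). { unfold Lf, ps, m. field. } rewrite Hsg. field. }
  assert (xps : x <= ps).
  { destruct (Rle_or_lt x ps) as [h|h]; [exact h|].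
    exfalso.     assert (Lf x q s a d e = - (x - ps) * (x + (sg + m)/2)).
    { transitivity (e*q*s - x^2 - m*x). { unfold Lf, m; field. }
      transitivity ((sg^2 - m^2)/4 - x^2 - m*x). { rewrite Hsg; field. } unfold ps; field. }
    assert (0 < (x - ps) * (x + (sg + m)/2)) by (apply Rmult_lt_0_compat; lra).
    lra. }
  assert (Tps : - (X*ps*W) < Tf ps q s a d e).
  { pose proof (ident ps q s a d e) as I. rewrite Lps in I.
    assert (0 < (ps^2+q^2+2*a*ps*q)*(ps^2+s^2+2*d*ps*s)).
    { assert (0 < ps*q) by nra. assert (0 < ps*s) by nra. apply Rmult_lt_0_compat; nra. }
    assert (0 < e^2-1) by nra.
    assert (Tf ps q s a d e ^2 < (X*ps*W)^2).
    { replace ((X*ps*W)^2) with (X^2*ps^2*W^2) by ring. rewrite HX, HW. nra. }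
    assert (0 <= X*ps*W) by (apply Rmult_le_pos; [apply Rmult_le_pos|]; lra).
    nra. }
  fold X W.
  set (K0 := (a+d*e)*s + (d+a*e)*q - X*W).
  assert (E1 : Tf x q s a d e + X*x*W = (e^2-1)*q*s - x*K0) by (unfold Tf, K0; ring).
  assert (E2 : Tf ps q s a d e + X*ps*W = (e^2-1)*q*s - ps*K0) by (unfold Tf, K0; ring).
  rewrite E1. destruct (Rle_or_lt K0 0); nra.
Qed.
Lemma Good x q s a d e : 0 < x -> 0 < q -> 0 < s -> 1 < a -> 1 < d -> 1 < e ->
  Tf x q s a d e < sqrt (Dlt a d e) * x * sqrt (q^2+s^2+2*e*q*s) ->
  sqrt (q^2+s^2+2*e*q*s) < sqrt (x^2+q^2+2*a*x*q) + sqrt (x^2+s^2+2*d*x*s).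
Proof.
  intros Hx Hq Hs Ha Hd He HT.
  assert (0 < x*q) by nra. assert (0 < x*s) by nra. assert (0 < q*s) by nra.
  set (X := sqrt (Dlt a d e)) in *.
  set (W := sqrt (q^2+s^2+2*e*q*s)) in *.
  set (sA := sqrt (x^2+q^2+2*a*x*q)). set (sB := sqrt (x^2+s^2+2*d*x*s)).
  assert (HX : X^2 = Dlt a d e) by (apply pow2_sqrt; left; apply Dlt_pos; lra).
  assert (X0 : 0 <= X) by apply sqrt_pos.
  assert (HW : W^2 = q^2+s^2+2*e*q*s) by (apply pow2_sqrt; nra).
  assert (W0 : 0 <= W) by apply sqrt_pos.
  assert (HA : sA^2 = x^2+q^2+2*a*x*q) by (apply pow2_sqrt; nra).
  assert (A0 : 0 <= sA) by apply sqrt_pos.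
  assert (HB : sB^2 = x^2+s^2+2*d*x*s) by (apply pow2_sqrt; nra).
  assert (B0 : 0 <= sB) by apply sqrt_pos.
  assert (EC : W^2 = sA^2 + sB^2 + 2 * Lf x q s a d e) by (rewrite HW, HA, HB; unfold Lf; ring).
  assert (0 <= sA*sB) by (apply Rmult_le_pos; lra).
  destruct (Rlt_or_le (Lf x q s a d e) 0) as [HL|HL].
  - nra.
  - pose proof (Kp x q s a d e Hx Hq Hs Ha Hd He HL) as K. fold X W in K.
    pose proof (ident x q s a d e) as I.
    assert (0 <= X*x*W) by (apply Rmult_le_pos; [apply Rmult_le_pos|]; lra).
    assert (T2 : Tf x q s a d e ^2 < (X*x*W)^2) by nra.
    assert (E3 : (X*x*W)^2 = Dlt a d e * x^2 * (q^2+s^2+2*e*q*s)) by (rewrite <- HX, <- HW; ring).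
    assert (0 < e^2-1) by nra.
    assert (P1 : Lf x q s a d e ^2 < (sA*sB)^2).
    { replace ((sA*sB)^2) with (sA^2*sB^2) by ring. rewrite HA, HB. nra. }
    assert (Lf x q s a d e < sA*sB) by nra.
    nra.
Qed.

Lemma Low x q s a d e : 0 < x -> 0 < q -> 0 < s -> 1 < a -> 1 < d -> 1 < e ->
  sqrt (x^2+q^2+2*a*x*q) < sqrt (q^2+s^2+2*e*q*s) + sqrt (x^2+s^2+2*d*x*s) ->
  sqrt (x^2+s^2+2*d*x*s) < sqrt (q^2+s^2+2*e*q*s) + sqrt (x^2+q^2+2*a*x*q) ->
  - (sqrt (Dlt a d e) * x * sqrt (q^2+s^2+2*e*q*s)) < Tf x q s a d e.
Proof.
  intros Hx Hq Hs Ha Hd He H1 H2.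
  destruct (Rle_or_lt 0 (Lf x q s a d e)) as [HL|HL].
  { pose proof (Kp x q s a d e Hx Hq Hs Ha Hd He HL). lra. }
  assert (0 < x*q) by nra. assert (0 < x*s) by nra. assert (0 < q*s) by nra.
  set (X := sqrt (Dlt a d e)) in *.
  set (W := sqrt (q^2+s^2+2*e*q*s)) in *.
  set (sA := sqrt (x^2+q^2+2*a*x*q)) in *. set (sB := sqrt (x^2+s^2+2*d*x*s)) in *.
  assert (HX : X^2 = Dlt a d e) by (apply pow2_sqrt; left; apply Dlt_pos; lra).
  assert (X0 : 0 <= X) by apply sqrt_pos.
  assert (HW : W^2 = q^2+s^2+2*e*q*s) by (apply pow2_sqrt; nra).
  assert (W0 : 0 <= W) by apply sqrt_pos.
  assert (HA : sA^2 = x^2+q^2+2*a*x*q) by (apply pow2_sqrt; nra).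
  assert (A0 : 0 <= sA) by apply sqrt_pos.
  assert (HB : sB^2 = x^2+s^2+2*d*x*s) by (apply pow2_sqrt; nra).
  assert (B0 : 0 <= sB) by apply sqrt_pos.
  assert (EC : W^2 = sA^2 + sB^2 + 2 * Lf x q s a d e) by (rewrite HW, HA, HB; unfold Lf; ring).
  assert (0 <= sA*sB) by (apply Rmult_le_pos; lra).
  destruct (Rlt_or_le (- (X*x*W)) (Tf x q s a d e)) as [h|h]; [exact h|exfalso].
  pose proof (ident x q s a d e) as I.
  assert (0 <= X*x*W) by (apply Rmult_le_pos; [apply Rmult_le_pos|]; lra).
  assert (T2 : (X*x*W)^2 <= Tf x q s a d e ^2) by nra.
  assert (E3 : (X*x*W)^2 = Dlt a d e * x^2 * (q^2+s^2+2*e*q*s)) by (rewrite <- HX, <- HW; ring).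
  assert (0 < e^2-1) by nra.
  assert (P1 : (sA*sB)^2 <= Lf x q s a d e ^2).
  { replace ((sA*sB)^2) with (sA^2*sB^2) by ring. rewrite HA, HB. nra. }
  assert (sA*sB <= - Lf x q s a d e) by nra.
  assert (W^2 <= (sA - sB)^2) by nra.
  nra.
Qed.
Lemma sqrt_eq_div (D R E : R) : 0 <= R -> 0 < E -> D * E^2 = R^2 -> sqrt D = R / E.
Proof.
  intros HR HE H.
  assert (D = (R/E)^2) by (field_simplify; [rewrite <- H; field|]; lra).
  subst D. rewrite sqrt_pow2; [reflexivity|].
  apply Rmult_le_pos; [lra| left; apply Rinv_0_lt_compat; lra].
Qed.
Lemma f_ident a b c d e : 1 < a -> 1 < b -> 1 < c -> 1 < d -> 1 < e ->
  sqrt (Dlt c d (fval a b c d e)) = (sqrt (Dlt b c e)*(a+d*e) + sqrt (Dlt a d e)*(b+c*e)) / (e^2-1)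
  /\ sqrt (Dlt a b (fval a b c d e)) = (sqrt (Dlt b c e)*(d+a*e) + sqrt (Dlt a d e)*(c+b*e)) / (e^2-1).
Proof.
  intros Ha Hb Hc Hd He.
  set (X := sqrt (Dlt a d e)). set (Y := sqrt (Dlt b c e)).
  assert (HX : X^2 = Dlt a d e) by (apply pow2_sqrt; left; apply Dlt_pos; lra).
  assert (HY : Y^2 = Dlt b c e) by (apply pow2_sqrt; left; apply Dlt_pos; lra).
  assert (X0 : 0 <= X) by apply sqrt_pos.
  assert (Y0 : 0 <= Y) by apply sqrt_pos.
  assert (HE : 0 < e^2 - 1) by nra.
  assert (hF : fval a b c d e * (e^2-1) = a*b + c*d + a*c*e + b*d*e + X*Y).
  { unfold fval. fold X Y. field. lra. }
  set (F := fval a b c d e) in *.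
  split; apply sqrt_eq_div; try lra; try (apply Rplus_le_le_0_compat; apply Rmult_le_pos; nra).
  - assert (E1 : Dlt c d F * (e^2-1)^2 = c^2*(e^2-1)^2 + d^2*(e^2-1)^2 + (F*(e^2-1))^2 + 2*c*d*(F*(e^2-1))*(e^2-1) - (e^2-1)^2) by (unfold Dlt; ring).
    rewrite E1, hF.
    transitivity ((Y * (a + d * e) + X * (b + c * e)) ^ 2 + X^2*(Y^2 - Dlt b c e) + (Dlt b c e - (b+c*e)^2)*(X^2 - Dlt a d e) - (a+d*e)^2*(Y^2 - Dlt b c e)).
    + unfold Dlt. ring.
    + rewrite HX, HY. ring.
  - assert (E1 : Dlt a b F * (e^2-1)^2 = a^2*(e^2-1)^2 + b^2*(e^2-1)^2 + (F*(e^2-1))^2 + 2*a*b*(F*(e^2-1))*(e^2-1) - (e^2-1)^2) by (unfold Dlt; ring).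
    rewrite E1, hF.
    transitivity ((Y * (d + a * e) + X * (c + b * e)) ^ 2 + X^2*(Y^2 - Dlt b c e) + (Dlt b c e - (c+b*e)^2)*(X^2 - Dlt a d e) - (d+a*e)^2*(Y^2 - Dlt b c e)).
    + unfold Dlt. ring.
    + rewrite HX, HY. ring.
Qed.

Theorem lemma4p3 (p q r s a b c d e : R)
  (hp : 0 < p) (hq : 0 < q) (hr : 0 < r) (hs : 0 < s)
  (ha : 1 < a) (hb : 1 < b) (hc : 1 < c) (hd : 1 < d) (he : 1 < e)
  (hineq : sqrt (Dlt b c e) / p + sqrt (Dlt a d e) / r
           <= sqrt (Dlt c d (fval a b c d e)) / q
              + sqrt (Dlt a b (fval a b c d e)) / s)
  (hQR : edge_len q r b < edge_len q s e + edge_len r s c)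
  (hSR : edge_len r s c < edge_len q s e + edge_len q r b) :
  edge_len p q a + edge_len s p d > edge_len q s e.
Proof.
  destruct (f_ident a b c d e ha hb hc hd he) as [F1 F2].
  rewrite F1, F2 in hineq.
  unfold edge_len in *.
  replace (s^2+p^2+2*d*s*p) with (p^2+s^2+2*d*p*s) by ring.
  replace (q^2+r^2+2*b*q*r) with (r^2+q^2+2*b*r*q) in hQR, hSR by ring.
  pose proof (Low r q s b c e hr hq hs hb hc he hQR hSR) as HR.
  apply Rlt_gt. apply Good; try assumption.
  set (X := sqrt (Dlt a d e)) in *. set (Y := sqrt (Dlt b c e)) in *.
  set (W := sqrt (q^2+s^2+2*e*q*s)) in *.
  assert (X0 : 0 < X) by (apply sqrt_lt_R0; apply Dlt_pos; lra).
  assert (Y0 : 0 < Y) by (apply sqrt_lt_R0; apply Dlt_pos; lra).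
  assert (HE : 0 < e^2-1) by nra.
  assert (Key : Y * r * Tf p q s a d e + X * p * Tf r q s b c e <= 0).
  { assert (Hm : 0 < p*q*r*s*(e^2-1)).
    { repeat apply Rmult_lt_0_compat; lra. }
    assert (Eq : ((Y * (a + d * e) + X * (b + c * e)) / (e ^ 2 - 1) / q +
         (Y * (d + a * e) + X * (c + b * e)) / (e ^ 2 - 1) / s - (Y/p + X/r)) * (p*q*r*s*(e^2-1))
         = - (Y * r * Tf p q s a d e + X * p * Tf r q s b c e)).
    { unfold Tf. field. repeat split; lra. }
    assert (0 <= ((Y * (a + d * e) + X * (b + c * e)) / (e ^ 2 - 1) / q +
         (Y * (d + a * e) + X * (c + b * e)) / (e ^ 2 - 1) / s - (Y/p + X/r)) * (p*q*r*s*(e^2-1))).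
    { apply Rmult_le_pos; lra. }
    lra. }
  assert (W0 : 0 <= W) by apply sqrt_pos.
  assert (H1 : X * p * (-(Y*r*W)) < X * p * Tf r q s b c e).
  { apply Rmult_lt_compat_l; [nra | lra]. }
  assert (H2 : Y * r * Tf p q s a d e < Y * r * (X * p * W)) by nra.
  assert (0 < Y * r) by nra.
  apply (Rmult_lt_reg_l (Y*r)); assumption.
Qed.
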